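(* Let $L$ be a finite label set and let $\varphi,\psi$ be positive existential HML formulas. For every pointed finite $L$-labeled transition system $(G,v)$, the following are equivalent: (i) for every finite $L$-labeled transition system $H$ and every homomorphism $h:G\to H$, if $\varphi$ holds at $h(v)$ in $H$ then $\psi$ holds at $h(v)$ in $H$ (i.e. $(S_\varphi\to_\Omega S_\psi)(G,v)$); (ii) $\psi$ holds at $\iota(v)$ in $\mathrm{Ext}(G,v,\varphi)$.
   Context: Positive existential HML ($\mathit{HML}^+$) is generated by $\top$, $\varphi_1\wedge\varphi_2$, and $\langle a\rangle\varphi$ ($a\in L$), with $\langle a\rangle\varphi$ true at $s$ iff some $a$-successor satisfies $\varphi$. Homomorphisms are maps on states preserving labeled edges. $S_\varphi$ is the subfunctor of the underlying-set presheaf with $S_\varphi(G,v)$ iff $\varphi$ holds at $v$ in $G$, and the presheaf Heyting implication is $(S_1\to_\Omega S_2)(G,v)$ iff for all $H$ and $h:G\to H$, $S_1(H,h(v))\Rightarrow S_2(H,h(v))$. The free extension $\mathrm{Ext}(G,v,\varphi)$ with inclusion $\iota:G\hookrightarrow\mathrm{Ext}(G,v,\varphi)$ is defined recursively: for $\top$, $G$ itself; for $\varphi_1\wedge\varphi_2$, adjoin (disjointly) the witness trees for $\varphi_1$ and for $\varphi_2$ at $v$; for $\langle a\rangle\varphi'$, adjoin a fresh vertex $w$ with an edge $v\xrightarrow{a}w$ and then the witness tree for $\varphi'$ at $w$; all original edges of $G$ are kept, and no other edges are added. *)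

(* Defs.v *)
From mathcomp Require Import all_boot.
Set Implicit Arguments. Unset Strict Implicit. Unset Printing Implicit Defensive.

Record LTS (L : finType) := MkLTS { state : finType; trans : L -> rel state }.
Arguments state {L} l.
Arguments trans {L} l _ _ _.

Inductive hmlp (L : Type) : Type :=
| HTop : hmlp L
| HAnd : hmlp L -> hmlp L -> hmlp L
| HDia : L -> hmlp L -> hmlp L.
Arguments HTop {L}.

Fixpoint sat (L : finType) (G : LTS L) (phi : hmlp L) (s : state G) : bool :=
  match phi with
  | HTop => true
  | HAnd p1 p2 => @sat L G p1 s && @sat L G p2 s
  | HDia a p => [exists t : state G, trans G a s t && @sat L G p t]
  end.
Arguments sat {L} G phi s.

Definition is_hom (L : finType) (G H : LTS L) (h : state G -> state H) : Prop :=
  forall (a : L) (x y : state G), trans G a x y -> trans H a (h x) (h y).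

(* Presheaf Heyting implication (S_phi ->_Omega S_psi)(G,v), unfolded:
   quantifies over all finite LTSs H and homomorphisms h : G -> H. *)
Definition heyting_imp (L : finType) (phi psi : hmlp L) (G : LTS L) (v : state G) : Prop :=
  forall (H : LTS L) (h : state G -> state H),
    is_hom h -> sat H phi (h v) -> sat H psi (h v).

(* number of fresh vertices (one per diamond) *)
Fixpoint ndia (L : Type) (phi : hmlp L) : nat :=
  match phi with
  | HTop => 0
  | HAnd p1 p2 => ndia p1 + ndia p2
  | HDia _ p => (ndia p).+1
  end.

(* Witness-tree edges for phi rooted at r; fresh vertices are inr k, inr k.+1, ...
   Returns the added edges and the next fresh index. *)
Fixpoint wtree (L : Type) (S : Type) (phi : hmlp L) (r : S + nat) (k : nat)
  : seq ((S + nat) * L * (S + nat)) * nat :=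
  match phi with
  | HTop => ([::], k)
  | HAnd p1 p2 =>
      let (e1, k1) := wtree p1 r k in
      let (e2, k2) := wtree p2 r k1 in (e1 ++ e2, k2)
  | HDia a p =>
      let w := inr k in
      let (e, k') := wtree p w k.+1 in ((r, a, w) :: e, k')
  end.

Definition ext_state (L : finType) (G : LTS L) (phi : hmlp L) : finType :=
  (state G + 'I_(ndia phi))%type.

Definition ext_node (L : finType) (G : LTS L) (phi : hmlp L)
  (x : ext_state G phi) : state G + nat :=
  match x with inl s => inl s | inr i => inr (nat_of_ord i) end.

Definition ext_trans (L : finType) (G : LTS L) (v : state G) (phi : hmlp L)
  (a : L) : rel (ext_state G phi) :=
  fun x y =>
    (match x, y with inl s, inl t => trans G a s t | _, _ => false end)
    || ((ext_node x, a, ext_node y) \in (wtree phi (inl v) 0).1).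

Arguments ext_trans {L G} v phi a _ _.

Definition Ext (L : finType) (G : LTS L) (v : state G) (phi : hmlp L) : LTS L :=
  @MkLTS L (ext_state G phi) (ext_trans v phi).

Definition ext_incl (L : finType) (G : LTS L) (v : state G) (phi : hmlp L)
  (s : state G) : state (Ext v phi) := @inl (state G) 'I_(ndia phi) s.
Arguments ext_incl {L G} v phi s.
Arguments Ext {L G} v phi.
Arguments heyting_imp {L} phi psi {G} v.

(* Main.v *)
Require Import Defs.
From mathcomp Require Import all_boot.
From mathcomp Require Import zify.
Set Implicit Arguments. Unset Strict Implicit. Unset Printing Implicit Defensive.

Lemma wtree_k (L S : Type) (p : hmlp L) (r : S + nat) k :
  (wtree p r k).2 = k + ndia p.
Proof.
elim: p r k => [|p1 IH1 p2 IH2|a p IH] r k /=; first by rewrite addn0.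
- have := IH1 r k; case: (wtree p1 r k) => e1 k1 /= ->.
  have := IH2 r (k + ndia p1); case: (wtree p2 r _) => e2 k2 /= ->.
  by rewrite addnA.
- have := IH (inr k) k.+1; case: (wtree p _ _) => e k' /= ->.
  by rewrite addnS.
Qed.

Lemma wtree_and (L S : Type) (p1 p2 : hmlp L) (r : S + nat) k :
  wtree (HAnd p1 p2) r k =
  ((wtree p1 r k).1 ++ (wtree p2 r (k + ndia p1)).1, k + ndia p1 + ndia p2).
Proof.
rewrite /=; have := wtree_k p1 r k; case: (wtree p1 r k) => e1 k1 /= ->.
have := wtree_k p2 r (k + ndia p1); case: (wtree p2 r _) => e2 k2 /= ->.
by [].
Qed.

Lemma wtree_dia (L S : Type) a (p : hmlp L) (r : S + nat) k :
  wtree (HDia a p) r k =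
  ((r, a, inr k) :: (wtree p (inr k) k.+1).1, k.+1 + ndia p).
Proof.
rewrite /=; have := wtree_k p (@inr S nat k) k.+1; case: (wtree p _ _) => e k' /= ->.
by [].
Qed.

Arguments wtree : simpl never.

Definition inrange (S : Type) k n (z : S + nat) : Prop :=
  exists j, z = inr j /\ k <= j < k + n.

Lemma wtree_range (L S : eqType) (p : hmlp L) (r : S + nat) k x a y :
  (x, a, y) \in (wtree p r k).1 ->
  (x = r \/ inrange k (ndia p) x) /\ inrange k (ndia p) y.
Proof.
elim: p r k => [|p1 IH1 p2 IH2|b p IH] r k //=.
- rewrite wtree_and /= mem_cat => /orP [E|E].
  + have [[->|[j [-> hj]]] [j' [-> hj']]] := IH1 _ _ E.
    * split; first by left.
      by exists j'; split => //; lia.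
    * split; first by right; exists j; split => //; lia.
      by exists j'; split => //; lia.
  + have [[->|[j [-> hj]]] [j' [-> hj']]] := IH2 _ _ E.
    * split; first by left.
      by exists j'; split => //; lia.
    * split; first by right; exists j; split => //; lia.
      by exists j'; split => //; lia.
- rewrite wtree_dia /= in_cons => /orP [/eqP [-> _ ->]|E].
  + split; first by left.
    by exists k; split => //; lia.
  + have [[->|[j [-> hj]]] [j' [-> hj']]] := IH _ _ E.
    * split; first by right; exists k; split => //; lia.
      by exists j'; split => //; lia.
    * split; first by right; exists j; split => //; lia.
      by exists j'; split => //; lia.
Qed.

Lemma sat_hom (L : finType) (G H : LTS L) (g : state G -> state H) :
  is_hom g -> forall p s, sat G p s -> sat H p (g s).
Proof.
move=> hg; elim => [|p1 IH1 p2 IH2|a p IH] s //=.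
- by move/andP => [h1 h2]; rewrite IH1 // IH2.
- move/existsP => [t /andP [ht hp]]; apply/existsP; exists (g t).
  by rewrite hg // IH.
Qed.

Lemma ext_sat (L : finType) (G : LTS L) (v : state G) (phi p : hmlp L)
  (r : state G + nat) k (x : ext_state G phi) :
  {subset (wtree p r k).1 <= (wtree phi (inl v) 0).1} ->
  k + ndia p <= ndia phi -> ext_node x = r -> sat (Ext v phi) p x.
Proof.
elim: p r k x => [|p1 IH1 p2 IH2|a p IH] r k x //= hsub hk hx.
- apply/andP; split.
  + apply: (IH1 r k); last by [].
    * by move=> z hz; apply: hsub; rewrite wtree_and mem_cat hz.
    * move: hk; rewrite /=; lia.
  + apply: (IH2 r (k + ndia p1)); last by [].
    * by move=> z hz; apply: hsub; rewrite wtree_and mem_cat hz orbT.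
    * move: hk; rewrite /=; lia.
- have hk' : k < ndia phi by lia.
  apply/existsP; exists (inr (Ordinal hk')); apply/andP; split.
  + rewrite /= /ext_trans; apply/orP; right; rewrite hx /=.
    by apply: hsub; rewrite wtree_dia mem_head.
  + apply: (IH (inr k) k.+1) => //.
    * by move=> z hz; apply: hsub; rewrite wtree_dia in_cons hz orbT.
    * lia.
Qed.

Definition gf (S T : Type) (hS : S -> T) (f : nat -> T) (z : S + nat) : T :=
  match z with inl s => hS s | inr j => f j end.

Definition old (S : Type) k (z : S + nat) : Prop :=
  match z with inl _ => True | inr j => j < k end.

Lemma gf_old (S T : Type) (hS : S -> T) f f' k (z : S + nat) :
  (forall j, j < k -> f' j = f j) -> old k z -> gf hS f' z = gf hS f z.
Proof. by case: z => //= j h; apply: h. Qed.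

Lemma wit (L : finType) (H : LTS L) (S : eqType) (hS : S -> state H)
  (p : hmlp L) (r : S + nat) k (f : nat -> state H) :
  old k r -> sat H p (gf hS f r) ->
  exists f', (forall j, j < k -> f' j = f j) /\
    forall x a y, (x, a, y) \in (wtree p r k).1 ->
      trans H a (gf hS f' x) (gf hS f' y).
Proof.
elim: p r k f => [|p1 IH1 p2 IH2|a p IH] r k f hr /=.
- by move=> _; exists f; split.
- move/andP => [s1 s2].
  have hr' : old (k + ndia p1) r.
    by move: hr; case: r s1 s2 => //= j _ _; lia.
  have [f1 [ag1 E1]] := IH1 r k f hr s1.
  have s2' : sat H p2 (gf hS f1 r) by rewrite (@gf_old _ _ hS f f1 k r ag1 hr).
  have [f2 [ag2 E2]] := IH2 r (k + ndia p1) f1 hr' s2'.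
  exists f2; split.
  + move=> j hj; rewrite ag2 ?ag1 //; lia.
  + move=> x b y; rewrite wtree_and mem_cat => /orP [E|E]; last exact: E2.
    have [hx hy] := wtree_range E.
    have cv : forall z, (z = r \/ inrange k (ndia p1) z) ->
        gf hS f2 z = gf hS f1 z.
      move=> z [->|[j [-> hj]]]; first exact: (@gf_old _ _ hS f1 f2 _ r ag2 hr').
      by rewrite /= ag2 //; lia.
    rewrite !cv //; first exact: E1.
    by right.
- move/existsP => [t /andP [ht hp]].
  pose f1 := fun j => if j == k then t else f j.
  have ag1 : forall j, j < k -> f1 j = f j.
    by move=> j hj; rewrite /f1; case: eqP => // Ej; move: hj; rewrite Ej ltnn.
  have s1 : sat H p (gf hS f1 (inr k)) by rewrite /= /f1 eqxx.
  have [f2 [ag2 E2]] := IH (inr k) k.+1 f1 (ltnSn k) s1.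
  exists f2; split.
  + move=> j hj; rewrite ag2 ?ag1 //; lia.
  + move=> x b y; rewrite wtree_dia in_cons => /orP [/eqP [-> -> ->]|E].
    * have ag : forall j, j < k -> f2 j = f j by move=> j hj; rewrite ag2 ?ag1 //; lia.
      rewrite (@gf_old _ _ hS f f2 k r ag hr) /= ag2 // /f1 eqxx; exact: ht.
    * exact: E2.
Qed.

Theorem mainTheorem19 (L : finType) (phi psi : hmlp L) (G : LTS L) (v : state G) :
  heyting_imp phi psi v <-> sat (Ext v phi) psi (ext_incl v phi v).
Proof.
split.
- move=> Himp; apply: Himp.
  + by move=> a x y hxy; rewrite /= /ext_trans /= hxy.
  + apply: (@ext_sat L G v phi phi (inl v) 0) => //.
- move=> Hs H h hh hphi.
  have [f' [_ E]] := @wit L H (state G) h phi (inl v) 0 (fun _ => h v) I hphi.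
  pose g := fun x : ext_state G phi => gf h f' (ext_node x).
  have hg : is_hom (g : state (Ext v phi) -> state H).
    move=> a x y /orP [Exy|Exy].
    + by case: x Exy => // s; case: y => // t /= Est; apply: hh.
    + exact: E Exy.
  exact: (sat_hom hg Hs).
Qed.
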